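(* Let $m\ge1$, $q=2^m$, let $n$ be even, and let $L$ be a $2$-linear polynomial over $\mathbb F_{q^n}$ that induces a bijection of $\mathbb F_{q^n}$, with inverse map written as \[L^{-1}(x)=\sum_{i=0}^{m-1}L_i\big(x^{2^i}\big),\] where each $L_i$ is a $q$-linear polynomial over $\mathbb F_{q^n}$. Then the following are equivalent: (a) $\mathrm{Tr}(x^{q+1})+L(x)$ is a permutation polynomial of $\mathbb F_{q^n}$; (b) $L_i(1)\in\mathbb F_{q^2}$ for $0\le i<m$; (c) $\mathbb F_q\subseteq L(\mathbb F_{q^2})$.
   Context: $\mathrm{Tr}$ denotes the trace map of $\mathbb F_{q^n}$ over $\mathbb F_q$. A $2$-linear polynomial over $\mathbb F_{q^n}$ has the form $\sum_{j=0}^{mn-1}a_jx^{2^j}$; a $q$-linear polynomial has the form $\sum_{j=0}^{n-1}a_jx^{q^j}$ ($a_j\in\mathbb F_{q^n}$); every $2$-linear polynomial can be written as $\sum_{i=0}^{m-1}L_i(x^{2^i})$ with $q$-linear $L_i$. Polynomials are regarded as maps on $\mathbb F_{q^n}$. *)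

(* Defs.v *)
From mathcomp Require Import all_boot all_algebra all_field.
Unset Implicit Arguments.
Import GRing.Theory.
Local Open Scope ring_scope.

(* Throughout, F is a finite field with q^n elements, q = 2^m. *)

Definition lin2 (F : finFieldType) (m n : nat) (a : 'I_(m * n) -> F) (x : F) : F :=
  \sum_(j < m * n) a j * x ^+ (2 ^ j).

Definition linq (F : finFieldType) (m n : nat) (b : 'I_n -> F) (x : F) : F :=
  \sum_(j < n) b j * x ^+ ((2 ^ m) ^ j).

Definition trq (F : finFieldType) (m n : nat) (x : F) : F :=
  \sum_(j < n) x ^+ ((2 ^ m) ^ j).

Definition inFqk (F : finFieldType) (m k : nat) (x : F) : bool :=
  x ^+ ((2 ^ m) ^ k) == x.

Arguments lin2 {F} m n a x.
Arguments linq {F} m n b x.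
Arguments trq {F} m n x.
Arguments inFqk {F} m k x.

(* Main.v *)
Require Import Defs.
From mathcomp Require Import all_boot all_algebra all_field ring.
Import GRing.Theory.
Local Open Scope ring_scope.


Lemma frobD (F : fieldType) (h2 : 2 \in [pchar F]) k (x y : F) :
  (x + y) ^+ (2 ^ k) = x ^+ (2 ^ k) + y ^+ (2 ^ k).
Proof. by apply: exprDn_pchar; rewrite pnatX (pnatE _ (isT : prime 2)) h2. Qed.

Lemma frob0 (F : fieldType) k : (0 : F) ^+ (2 ^ k) = 0.
Proof. by rewrite expr0n expn_eq0. Qed.

Lemma frob_sum (F : fieldType) (h2 : 2 \in [pchar F]) k (I : Type) (r : seq I) (P : pred I) (f : I -> F) :
  (\sum_(i <- r | P i) f i) ^+ (2 ^ k) = \sum_(i <- r | P i) (f i) ^+ (2 ^ k).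
Proof. elim/big_rec2: _ => [|i y1 y2 _ <-]; [exact: frob0| exact: frobD]. Qed.

Lemma Fq_pow (F : fieldType) m j (c : F) : c ^+ (2 ^ m) = c -> c ^+ ((2 ^ m) ^ j) = c.
Proof.
move=> hc; elim: j => [|j IH]; first by rewrite expn0 expr1.
by rewrite expnSr exprM IH hc.
Qed.

Lemma card_le_roots (F : finFieldType) (A : {pred F}) (p : {poly F}) N :
  p != 0 -> (size p <= N.+1)%N -> (forall x, x \in A -> root p x) -> (#|A| <= N)%N.
Proof.
move=> p0 sp hA; have := max_poly_roots p0 _ (enum_uniq A).
rewrite -cardE => H; rewrite -ltnS (leq_trans (H _) sp) //.
by apply/allP => x; rewrite mem_enum; apply: hA.
Qed.

Lemma size_sum_le (F : fieldType) (I : Type) (r : seq I) (P : pred I) (f : I -> {poly F}) N :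
  (forall i, P i -> (size (f i) <= N)%N) -> (size (\sum_(i <- r | P i) f i)%R <= N)%N.
Proof.
move=> h; elim/big_ind: _ => //; first by rewrite size_poly0.
by move=> p q hp hq; rewrite (leq_trans (size_polyD _ _)) // geq_max hp hq.
Qed.


Lemma tr_frob (F : finFieldType) (m n : nat) (h2 : 2 \in [pchar F]) (hcard : forall x : F, x ^+ ((2 ^ m) ^ n) = x) (x : F) : (trq m n x) ^+ (2 ^ m) = trq m n x.
Proof.
rewrite /trq (frob_sum _ h2).
under eq_bigr do rewrite -exprM -expnSr.
case: n hcard => [|n'] hc; first by rewrite !big_ord0.
rewrite big_ord_recr big_ord_recl /= hc expn0 expr1 addrC; congr (_ + _).
Qed.

Lemma tr_frobx (F : finFieldType) (m n : nat) (h2 : 2 \in [pchar F]) (hcard : forall x : F, x ^+ ((2 ^ m) ^ n) = x) (x : F) : trq m n (x ^+ (2 ^ m)) = trq m n x.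
Proof.
rewrite -[RHS](tr_frob F m n h2 hcard) /trq (frob_sum _ h2); apply: eq_bigr => j _; by rewrite exprAC.
Qed.

Lemma trD (F : finFieldType) (m n : nat) (h2 : 2 \in [pchar F]) (x y : F) : trq m n (x + y) = trq m n x + trq m n y.
Proof. by rewrite /trq -big_split; apply: eq_bigr => j _; rewrite -expnM (frobD _ h2). Qed.

Lemma trZ (F : finFieldType) (m n : nat) (c x : F) : c ^+ (2 ^ m) = c -> trq m n (c * x) = c * trq m n x.
Proof.
move=> hc; rewrite /trq mulr_sumr; apply: eq_bigr => j _.
by rewrite exprMn Fq_pow.
Qed.

Lemma tr_const (F : finFieldType) (m n : nat) (h2 : 2 \in [pchar F]) (c : F) : ~~ odd n -> c ^+ (2 ^ m) = c -> trq m n c = 0.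
Proof.
move=> hn hc; rewrite /trq.
under eq_bigr do rewrite Fq_pow //.
rewrite sumr_const card_ord -(odd_double_half n) (negbTE hn) add0n -muln2.
by rewrite mulrnA mulr2n addrr_pchar2.
Qed.


Lemma tr_surj (F : finFieldType) m n (h2 : 2 \in [pchar F]) (hm : (0 < m)%N) (hn : (0 < n)%N)
  (hF : #|F| = ((2^m)^n)%N) :
  (forall c : F, c ^+ (2^m) = c -> exists x, trq m n x = c) /\
  #|[pred x : F | x ^+ (2^m) == x]| = (2^m)%N.
Proof.
have hq1 : (1 < 2 ^ m)%N by rewrite -{1}(expn0 2) ltn_exp2l.
have hcard : forall x : F, x ^+ ((2^m)^n) = x by move=> x; rewrite -hF expf_card.
set q := (2 ^ m)%N in hq1 hcard hF *.
have q0 : (q == 0)%N = false by rewrite gtn_eqF // ltnW.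
have q1 : (q == 1)%N = false by rewrite gtn_eqF.
pose Sq := [pred x : F | x ^+ q == x].
pose I := [set trq m n x | x : F].
have sub : I \subset Sq.
  by apply/subsetP => y /imsetP [x _ ->]; rewrite inE /= tr_frob.
have cSq : (#|Sq| <= q)%N.
  apply: (@card_le_roots _ _ ('X^q - 'X)).
  - apply/eqP => /(congr1 (fun p : {poly F} => p`_q)).
    rewrite coefB coefXn coefX eqxx q1 subr0 => /eqP.
    by rewrite coef0 /= oner_eq0.
  - rewrite (leq_trans (size_polyD _ _)) // size_polyN size_polyX size_polyXn geq_max leqnn /=.
    exact: leq_trans hq1 (leqnSn q).
  - by move=> x; rewrite inE /= rootE hornerD hornerN hornerXn hornerX subr_eq0.
clear I sub.
case: n hn hF hcard => // n' _ hF hcard.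
pose I := [set trq m n'.+1 x | x : F].
have sub : I \subset Sq.
  by apply/subsetP => y /imsetP [x _ ->]; rewrite inE /= tr_frob.
pose TrP := \sum_(j < n'.+1) 'X^(q ^ j) : {poly F}.
have cfib : forall y : F, (#|[pred x : F | trq m n'.+1 x == y]| <= q ^ n')%N.
  move=> y; apply: (@card_le_roots _ _ (TrP - y%:P)).
  - apply/eqP => /(congr1 (fun p : {poly F} => p`_(q ^ n'))).
    rewrite coefB coefC expn_eq0 q0 /= subr0 coef_sum.
    rewrite coef0 big_ord_recr /= coefXn eqxx big1 => [|j _].
      by rewrite add0r => /eqP; rewrite oner_eq0.
    by rewrite coefXn eqn_exp2l // gtn_eqF.
  - rewrite (leq_trans (size_polyD _ _)) // size_polyN geq_max.
    rewrite (leq_trans (size_polyC_leq1 _)) ?andbT //.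
    apply: size_sum_le => j _; rewrite size_polyXn ltnS leq_exp2l //.
    by rewrite -ltnS.
  - move=> x; rewrite inE /= rootE hornerD hornerN horner_sum hornerC subr_eq0.
    by under eq_bigr do rewrite hornerXn.
have cI : (q ^ n'.+1 <= #|I| * q ^ n')%N.
  rewrite -hF.
  have -> : #|F| = (\sum_(y in I) #|[pred x : F | trq m n'.+1 x == y]|)%N.
    rewrite -sum1_card (partition_big (trq m n'.+1) (mem I)) => [|x _]; last by apply: imset_f.
    by apply: eq_bigr => y _; rewrite -sum1_card; apply: eq_bigl => x.
  by rewrite -sum_nat_const; apply: leq_sum => y _; exact: cfib.
have qI : (q <= #|I|)%N.
  by rewrite expnS leq_pmul2r ?expn_gt0 ?(ltnW hq1) in cI.
have eqc : #|I| = #|Sq| by apply/eqP; rewrite eqn_leq subset_leq_card // (leq_trans cSq qI).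
have IS : I =i Sq by apply/subset_cardP.
split.
  move=> c hc; have : c \in I by rewrite IS inE /= hc.
  by case/imsetP => x _ ->; exists x.
by apply/eqP; rewrite eqn_leq cSq -eqc qI.
Qed.


Lemma lin2D (F : finFieldType) (h2 : 2 \in [pchar F]) m n a (x y : F) :
  lin2 m n a (x + y) = lin2 m n a x + lin2 m n a y.
Proof. by rewrite /lin2 -big_split; apply: eq_bigr => j _; rewrite (frobD _ h2) mulrDr. Qed.

Lemma linqD (F : finFieldType) (h2 : 2 \in [pchar F]) m n b (x y : F) :
  linq m n b (x + y) = linq m n b x + linq m n b y.
Proof. by rewrite /linq -big_split; apply: eq_bigr => j _; rewrite -expnM (frobD _ h2) mulrDr. Qed.

Lemma linqZ (F : finFieldType) m n b (c y : F) : c ^+ (2 ^ m) = c ->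
  linq m n b (c * y) = c * linq m n b y.
Proof.
move=> hc; rewrite /linq mulr_sumr; apply: eq_bigr => j _.
by rewrite exprMn Fq_pow // mulrCA.
Qed.

Lemma c2swap (F : fieldType) (h2' : (2:F) = 0) (A B x y : F) : A + x = B + y -> x + y = A + B.
Proof. move=> e; have -> : x = B + y + A by rewrite -e; ring: h2'. ring: h2'. Qed.

Theorem mainTheorem13 (F : finFieldType) (m n : nat)
  (hm : (0 < m)%N) (hn : ~~ odd n) (hF : #|F| = ((2 ^ m) ^ n)%N)
  (a : 'I_(m * n) -> F) (b : 'I_m -> 'I_n -> F)
  (hbij : bijective (lin2 m n a))
  (hinv : forall x : F,
     \sum_(i < m) linq m n (b i) ((lin2 m n a x) ^+ (2 ^ i)) = x) :
  [<-> bijective (fun x : F => trq m n (x ^+ (2 ^ m + 1)) + lin2 m n a x);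
       (forall i : 'I_m, inFqk m 2 (linq m n (b i) 1));
       (forall y : F, inFqk m 1 y ->
          exists2 x : F, inFqk m 2 x & lin2 m n a x = y)].
Proof.
have hF' : #|F| = (2 ^ (m * n))%N by rewrite expnM.
have h2 : 2 \in [pchar F] := card_finPcharP hF' (isT : prime 2).
have h2' : (2 : F) = 0 by exact: pcharf0 h2.
have n0 : (0 < n)%N.
  case: n hF {hn hF' a b hbij hinv} => // hF.
  by have := finNzRing_gt1 F; rewrite hF.
have [hsurj cardSq] := tr_surj F m n h2 hm n0 hF.
have hcard : forall x : F, x ^+ ((2 ^ m) ^ n) = x by move=> x; rewrite -hF expf_card.
have trD' := trD F m n h2.
have trfrob := tr_frob F m n h2 hcard.
have trfrobx := tr_frobx F m n h2 hcard.
have trconst := tr_const F m n h2.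
have frobD' := frobD F h2.
pose L := lin2 m n a.
pose Li := fun y : F => \sum_(i < m) linq m n (b i) (y ^+ (2 ^ i)).
have LiL : forall x, Li (L x) = x := hinv.
have [Lv _ Lv2'] := hbij.
have Lv2 : forall y, L (Lv y) = y := Lv2'.
have LLi : forall y, L (Li y) = y.
  by move=> y; have := LiL (Lv y); rewrite Lv2 => ->; rewrite Lv2.
have LD : forall x y, L (x + y) = L x + L y := lin2D F h2 m n a.
have LiD : forall x y, Li (x + y) = Li x + Li y.
  by move=> x y; rewrite /Li -big_split; apply: eq_bigr => i _; rewrite frobD' (linqD F h2).
have Li0 : Li 0 = 0 by have := LiD 0 0; rewrite addr0 addrr_pchar2.
have LiFq : forall c, c ^+ (2 ^ m) = c ->
    Li c = \sum_(i < m) c ^+ (2 ^ i) * linq m n (b i) 1.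
  move=> c hc; rewrite /Li; apply: eq_bigr => i _.
  by rewrite -linqZ ?mulr1 // exprAC hc.
pose h := fun x : F => trq m n (x ^+ (2 ^ m + 1)).
have hD : forall y d, h (y + d) = h y + trq m n (y * d ^+ (2 ^ m))
      + trq m n (d * y ^+ (2 ^ m)) + trq m n (d ^+ (2 ^ m + 1)).
  move=> y d; rewrite /h !addn1 !exprS frobD' mulrDl !mulrDr !addrA.
  by rewrite !trD'.
have hFq : forall x, (h x) ^+ (2 ^ m) = h x by move=> x; rewrite /h trfrob.
have q2 : forall x : F, (x ^+ (2 ^ m)) ^+ (2 ^ m) = x ^+ ((2 ^ m) ^ 2).
  by move=> x; rewrite -exprM mulnn.
have d1Fq : forall d : F, (d ^+ (2 ^ m + 1)) ^+ (2 ^ m) = d ^+ (2 ^ m + 1) ->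
    trq m n (d ^+ (2 ^ m + 1)) = 0.
  by move=> d hd; apply: trconst.
pose C' := forall c : F, c ^+ (2 ^ m) = c -> Li c ^+ ((2 ^ m) ^ 2) = Li c.
have CB : C' -> bijective (fun x : F => trq m n (x ^+ (2 ^ m + 1)) + lin2 m n a x).
  move=> hC; apply: injF_bij => x y /= exy.
  have e1 : Li (h x) + x = Li (h y) + y.
    by rewrite -(LiL x) -(LiL y) -!LiD LiL LiL -/L; congr Li; rewrite /h exy.
  have hdc : x + y = Li (h x + h y) by rewrite LiD; apply: (c2swap _ h2').
  set c := h x + h y in hdc.
  have cq : c ^+ (2 ^ m) = c by rewrite /c frobD' !hFq.
  have dF2 := hC c cq; rewrite -hdc in dF2.
  have xd : x = y + (x + y) by ring: h2'.
  have c0 : c = 0.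
    rewrite /c {1}xd hD; set d := x + y in dF2 *.
    have T2 : trq m n (d * y ^+ (2 ^ m)) = trq m n (y * d ^+ (2 ^ m)).
      by rewrite -[RHS]trfrobx exprMn q2 dF2 mulrC.
    have T3 : trq m n (d ^+ (2 ^ m + 1)) = 0.
      apply: trconst hn _; rewrite addn1 exprS exprMn q2 dF2 mulrC //.
    rewrite T2 T3; ring: h2'.
  by rewrite c0 Li0 in hdc; rewrite xd hdc addr0.
have [n' en] : exists n', n = n'.+1 by exists n.-1; rewrite prednK.
have hcard' : forall x : F, x ^+ ((2 ^ m) ^ n' * 2 ^ m) = x by move=> x; rewrite -expnSr -en.
have AC : bijective (fun x : F => trq m n (x ^+ (2 ^ m + 1)) + lin2 m n a x) -> C'.
  move=> fb c hc; have finj := bij_inj fb.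
  set d := Li c.
  have Ld : L d = c := LLi c.
  case: (eqVneq (d ^+ ((2 ^ m) ^ 2)) d) => // hne; exfalso.
  pose e := d ^+ ((2 ^ m) ^ n') + d ^+ (2 ^ m).
  have e0 : e != 0.
    apply/eqP => /eqP; rewrite addr_eq0 (oppr_pchar2 h2) => /eqP he.
    by move/eqP: hne; apply; rewrite -q2 -he -exprM hcard'.
  pose t := c + trq m n (d ^+ (2 ^ m + 1)).
  have tq : t ^+ (2 ^ m) = t by rewrite /t frobD' hc trfrob.
  have [z hz] := hsurj t tq.
  pose x := z / e.
  suff hf : h (x + d) + L (x + d) = h x + L x.
    have := finj _ _ hf => /(congr1 (fun w => w - x)); rewrite addrC addKr subrr => d0.
    by move: hne; rewrite d0 expr0n !expn_eq0 /= eqxx.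
  have U : trq m n (d * x ^+ (2 ^ m)) = trq m n (x * d ^+ ((2 ^ m) ^ n')).
    by rewrite -[RHS]trfrobx [in RHS]exprMn -[in RHS]exprM hcard' mulrC.
  have Txe : trq m n (x * d ^+ (2 ^ m)) + trq m n (x * d ^+ ((2 ^ m) ^ n')) = t.
    by rewrite -trD' -mulrDr (addrC (d ^+ (2 ^ m))) -/e /x divfK.
  have T1e : trq m n (x * d ^+ (2 ^ m)) = t + trq m n (x * d ^+ ((2 ^ m) ^ n')).
    by rewrite -Txe; ring: h2'.
  rewrite hD LD Ld U T1e /t; ring: h2'.
have CP2 : C' -> (forall y : F, inFqk m 1 y -> exists2 x : F, inFqk m 2 x & lin2 m n a x = y).
  move=> hC y; rewrite /inFqk expn1 => /eqP hy.
  by exists (Li y); [apply/eqP; exact: hC | exact: LLi].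
have P2C : (forall y : F, inFqk m 1 y -> exists2 x : F, inFqk m 2 x & lin2 m n a x = y) -> C'.
  move=> hP c hc; have hc1 : inFqk m 1 c by rewrite /inFqk expn1 hc.
  have [x hx hLx] := hP c hc1.
  by have := LiL x; rewrite /L hLx => ->; apply/eqP.
have P1C : (forall i : 'I_m, inFqk m 2 (linq m n (b i) 1)) -> C'.
  move=> hB c hc; rewrite LiFq // -expnM (frob_sum F h2); apply: eq_bigr => i _.
  have hci : (c ^+ (2 ^ i)) ^+ (2 ^ m) = c ^+ (2 ^ i) by rewrite exprAC hc.
  by rewrite exprMn expnM (Fq_pow _ _ 2 _ hci) (eqP (hB i)).
have CP1 : C' -> (forall i : 'I_m, inFqk m 2 (linq m n (b i) 1)).
  move=> hC i; rewrite /inFqk.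
  pose e := fun k : 'I_m => linq m n (b k) 1 ^+ ((2 ^ m) ^ 2) - linq m n (b k) 1.
  pose P := \sum_(k < m) e k *: 'X^(2 ^ k) : {poly F}.
  have P0 : P = 0.
    apply: (@roots_geq_poly_eq0 _ P (enum [pred x : F | x ^+ (2 ^ m) == x])).
    - apply/allP => x; rewrite mem_enum inE /= => /eqP hx.
      rewrite rootE horner_sum.
      under eq_bigr do rewrite hornerZ hornerXn.
      have := hC x hx; rewrite LiFq // -expnM (frob_sum F h2) => hs.
      have -> : \sum_(k < m) e k * x ^+ (2 ^ k) =
          \sum_(k < m) (x ^+ (2 ^ k) * linq m n (b k) 1) ^+ (2 ^ (m * 2))
          - \sum_(k < m) x ^+ (2 ^ k) * linq m n (b k) 1.
        rewrite -sumrB; apply: eq_bigr => k _.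
        have hxk : (x ^+ (2 ^ k)) ^+ (2 ^ m) = x ^+ (2 ^ k) by rewrite exprAC hx.
        rewrite exprMn expnM (Fq_pow _ _ 2 _ hxk) /e; ring.
      by rewrite hs subrr.
    - exact: enum_uniq.
    - rewrite -cardE cardSq; apply: size_sum_le => k _.
      rewrite (leq_trans (size_scale_leq _ _)) // size_polyXn ltn_exp2l //.
  have := congr1 (fun p : {poly F} => p`_(2 ^ i)) P0.
  rewrite coef_sumMXn coef0 (big_pred1 i) => [/eqP|k /=]; last by rewrite eqn_exp2l.
  by rewrite subr_eq0.
tfae => [hA | hB | hC].
- exact: CP1 (AC hA).
- exact: CP2 (P1C hB).
- exact: CB (P2C hC).
Qed.
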